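(* For each $2p\in\{50, 98, 170, 242, 290, 338\}$ there exists a cyclic DCA$(4,2p+1;2p)$ satisfying P1 and P2.
   Context: A difference covering array DCA$(k,\eta;n)$ over $\mathbb{Z}_n$ (a cyclic DCA) is an $\eta\times k$ matrix $Q=[q(i,j)]$ with entries in $\mathbb{Z}_n$ such that for every pair of distinct columns $j,j'$ the multiset $\{q(i,j)-q(i,j') : 0\le i\le \eta-1\}$ contains every element of $\mathbb{Z}_n$ at least once. A DCA$(k,n+1;n)$ is taken in normalized form: all entries of its last row (row $n$) and last column (column $k-1$) equal $0$. It satisfies P1 if $0$ occurs at least twice in every column, and P2 if for all distinct columns $j,j'$ with $j\neq k-1\neq j'$, the set $\{q(i,j)-q(i,j') : 0\le i\le n-1\}$ equals $\mathbb{Z}_n\setminus\{0\}$. *)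

(* Defs.v *)
From mathcomp Require Import all_boot all_algebra.
Set Implicit Arguments. Unset Strict Implicit. Unset Printing Implicit Defensive.
Import GRing.Theory.
Local Open Scope ring_scope.

(* A DCA(k, eta; n) over Z_n: an eta x k matrix with entries in 'Z_n
   (used only with 1 < n). *)
Definition is_DCA (n eta k : nat) (Q : 'M['Z_n]_(eta, k)) : Prop :=
  forall j j' : 'I_k, j != j' ->
    forall x : 'Z_n, exists i : 'I_eta, Q i j - Q i j' = x.

Definition normalized_DCA (n k : nat) (Q : 'M['Z_n]_(n.+1, k.+1)) : Prop :=
  (forall j, Q ord_max j = 0) /\ (forall i, Q i ord_max = 0).

Definition DCA_P1 (n eta k : nat) (Q : 'M['Z_n]_(eta, k)) : Prop :=
  forall j : 'I_k, (2 <= #|[set i : 'I_eta | Q i j == 0%R]|)%N.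

Definition DCA_P2 (n k : nat) (Q : 'M['Z_n]_(n.+1, k.+1)) : Prop :=
  forall j j' : 'I_k.+1, j != j' -> j != ord_max -> j' != ord_max ->
    [set Q i j - Q i j' | i : 'I_n.+1 & (val i < n)%N] = [set~ 0].

(* Main.v *)
Require Import Defs.
From mathcomp Require Import all_boot all_algebra.
From mathcomp Require Import zify.
Import GRing.Theory.

Definition dl n (s t : seq nat) := [seq ((x.1 + n - x.2) %% n)%N | x <- zip s t].
Definition goodpair0 n s t :=
  (0%N \notin dl n s t) && all (fun k => k \in dl n s t) (iota 1 n.-1).
Definition expd n := iota 1 n./2 ++ iota n./2 (n - n./2).
Definition goodpair n s t := (0 < n./2)%N && (sort leq (dl n s t) == expd n).
Definition goodperm n s := sort leq s == iota 0 n.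

Lemma goodpermP n s : goodperm n s -> perm_eq s (iota 0 n).
Proof. by move/eqP => <-; rewrite perm_sym perm_sort perm_refl. Qed.

Lemma goodpairP n s t : goodpair n s t -> goodpair0 n s t.
Proof.
case/andP => n2 /eqP e; rewrite /goodpair0.
have mE : forall x, (x \in dl n s t) = (x \in expd n) by move=> x; rewrite -e mem_sort.
rewrite mE /expd mem_cat !mem_iota /=; apply/andP; split.
  lia.
apply/allP => k; rewrite mem_iota mE /expd mem_cat !mem_iota => /andP[h1 h2].
apply/orP; have [h|h] := leqP k n./2; [left|right]; lia.
Qed.
Definition SS n (s0 s1 s2 : seq nat) := [:: s0; s1; s2; nseq n 0%N].
Definition good n s0 s1 s2 :=
  [&& goodperm n s0, goodperm n s1, goodperm n s2,
      goodpair n s0 s1, goodpair n s1 s0, goodpair n s0 s2, goodpair n s2 s0,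
      goodpair n s1 s2 & goodpair n s2 s1].

Definition mkQ m (S : seq (seq nat)) : 'M['Z_(m.+2)]_(m.+3, 4) :=
  \matrix_(i, j) if (i < m.+2)%N then inZp (nth 0%N (nth [::] S j) i) else 0%R.

Section Gen.
Variables (m : nat) (s0 s1 s2 : seq nat).
Hypothesis G : good m.+2 s0 s1 s2.
Local Notation n := m.+2.
Local Notation S := (SS n s0 s1 s2).
Local Notation Q := (mkQ m S).

Lemma gperm {j : nat} : (j < 3)%N -> perm_eq (nth [::] S j) (iota 0 n).
Proof.
by move: G => /andP[/goodpermP ? /andP[/goodpermP ? /andP[/goodpermP ? _]]]; case: j => [|[|[|j]]].
Qed.

Lemma gpair {j j' : nat} : (j < 3)%N -> (j' < 3)%N -> j != j' ->
  goodpair0 n (nth [::] S j) (nth [::] S j').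
Proof.
by move: G => /andP[_ /andP[_ /andP[_ /andP[/goodpairP ? /andP[/goodpairP ? /andP[/goodpairP ? /andP[/goodpairP ? /andP[/goodpairP ? /goodpairP ?]]]]]]]];
  case: j => [|[|[|j]]]; case: j' => [|[|[|j']]].
Qed.

Lemma gsize {j} : (j < 3)%N -> size (nth [::] S j) = n.
Proof. by move=> /gperm /perm_size ->; rewrite size_iota. Qed.

Lemma glt {j i} : (j < 3)%N -> (i < n)%N -> (nth 0%N (nth [::] S j) i < n)%N.
Proof.
move=> hj hi; have hs : (i < size (nth [::] S j))%N by rewrite gsize.
have := mem_nth 0%N hs; rewrite (perm_mem (gperm hj)) mem_iota add0n.
by case/andP.
Qed.

Lemma Qval (i : 'I_n.+1) (j : 'I_4) : (i < n)%N -> (j < 3)%N ->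
  val (Q i j) = nth 0%N (nth [::] S j) i.
Proof.
move=> hi hj; rewrite mxE hi /=. rewrite /Zp_trunc /=. by apply: modn_small; apply: glt.
Qed.

Lemma Q3 (i : 'I_n.+1) (j : 'I_4) : (3 <= j)%N -> Q i j = 0%R.
Proof.
move=> hj; have ej : nat_of_ord j = 3 by have := ltn_ord j; lia.
rewrite mxE ej; case: ifP => // _; apply: val_inj.
have -> : nth [::] S 3 = nseq n 0%N by [].
by rewrite nth_nseq if_same /= mod0n.
Qed.

Lemma Qlast (j : 'I_4) : Q ord_max j = 0%R.
Proof. by rewrite mxE /= ltnn. Qed.

Lemma subZ (u v : 'Z_n) : val (u - v)%R = ((u + n - v) %% n)%N.
Proof.
rewrite /= /Zp_trunc /= modnDmr addnBA //; exact: ltnW (ltn_ord v).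
Qed.

Lemma Qdiff (i : 'I_n.+1) (j j' : 'I_4) : (i < n)%N -> (j < 3)%N -> (j' < 3)%N ->
  val (Q i j - Q i j')%R = nth 0%N (dl n (nth [::] S j) (nth [::] S j')) i.
Proof.
move=> hi hj hj'; rewrite subZ !Qval //.
rewrite /dl (nth_map (0,0)%N) ?size_zip ?gsize ?minnn //.
by rewrite nth_zip //= !gsize.
Qed.

Lemma dlsize {j j'} : (j < 3)%N -> (j' < 3)%N ->
  size (dl n (nth [::] S j) (nth [::] S j')) = n.
Proof. by move=> hj hj'; rewrite size_map size_zip !gsize ?minnn. Qed.

Lemma colcover (j : 'I_4) (y : 'Z_n) : (j < 3)%N ->
  exists i : 'I_n.+1, (i < n)%N /\ Q i j = y.
Proof.
move=> hj.
have yin : val y \in nth [::] S j.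
  by rewrite (perm_mem (gperm hj)) mem_iota /=; have := ltn_ord y; rewrite /Zp_trunc /=.
have hi : (index (val y) (nth [::] S j) < n)%N
  by have := index_mem (val y) (nth [::] S j); rewrite yin gsize.
exists (Ordinal (ltnW hi : (_ < n.+1)%N)); split => //.
by apply: val_inj; rewrite Qval //= nth_index.
Qed.

Lemma P2gen : DCA_P2 Q.
Proof.
move=> j j' jj' jm j'm.
have hj : (j < 3)%N.
  by move: jm; rewrite -val_eqE /=; have := ltn_ord j; lia.
have hj' : (j' < 3)%N.
  by move: j'm; rewrite -val_eqE /=; have := ltn_ord j'; lia.
have jj : (val j != val j') by [].
case/andP: (gpair hj hj' jj) => nz cov.
apply/setP => x; rewrite !inE; apply/idP/idP.
  case/imsetP => i; rewrite inE => hi ->.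
  apply/eqP => /(congr1 val); rewrite Qdiff //= => e.
  have hs : (i < size (dl n (nth [::] S j) (nth [::] S j')))%N by rewrite dlsize.
  by move: (mem_nth 0%N hs); rewrite e (negbTE nz).
move=> xn0.
have xin : val x \in dl n (nth [::] S j) (nth [::] S j').
  apply: (allP cov); rewrite mem_iota.
  have := ltn_ord x; rewrite /Zp_trunc /=.
  have : nat_of_ord x != 0%N by move: xn0; apply: contra => /eqP h; apply/eqP/val_inj.
  by move=> h1 h2; rewrite lt0n h1.
have hi : (index (val x) (dl n (nth [::] S j) (nth [::] S j')) < n)%N
  by have := index_mem (val x) (dl n (nth [::] S j) (nth [::] S j')); rewrite xin dlsize.
apply/imsetP; exists (Ordinal (ltnW hi : (_ < n.+1)%N)); first by rewrite inE.
by apply: val_inj; rewrite Qdiff //= nth_index.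
Qed.

Lemma allgen : is_DCA Q /\ normalized_DCA Q /\ DCA_P1 Q /\ DCA_P2 Q.
Proof.
split; last split; last split; last exact: P2gen.
- move=> j j' jj' x.
  have [hj|hj] := ltnP j 3; have [hj'|hj'] := ltnP j' 3.
  + have [->|x0] := eqVneq x 0%R.
      by exists ord_max; rewrite !Qlast subr0.
    have : x \in [set~ 0%R] by rewrite !inE.
    rewrite -(P2gen _ _ jj'); last first.
    * by rewrite -val_eqE /= neq_ltn hj'.
    * by rewrite -val_eqE /= neq_ltn hj.
    by case/imsetP => i _ ->; exists i.
  + by have [i [_ e]] := colcover j x hj; exists i; rewrite (Q3 i j' hj') subr0.
  + have [i [_ e]] := colcover j' (- x)%R hj'; exists i.
    by rewrite (Q3 i j hj) e sub0r opprK.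
  + by move: jj'; rewrite -val_eqE /=; have := ltn_ord j; have := ltn_ord j'; lia.
- split; first exact: Qlast.
  by move=> i; apply: Q3.
- move=> j; apply/card_gt1P.
  have [i0 [hi0 e0]] : exists i : 'I_n.+1, (i < n)%N /\ Q i j = 0%R.
    have [hj|hj] := ltnP j 3; first exact: colcover.
    by exists (Ordinal (isT : (0 < n.+1)%N)); rewrite Q3.
  exists i0, ord_max; rewrite !inE e0 Qlast eqxx; split => //.
  by rewrite -val_eqE /= neq_ltn hi0.
Qed.
End Gen.


Definition L50_0 : seq nat := [:: 6; 24; 37; 21; 43; 18; 49; 40; 5; 12; 36; 9; 42; 31; 48; 3; 29; 0; 10; 22; 16; 44; 47; 41; 28; 38; 34; 35; 15; 32; 46; 4; 27; 26; 8; 23; 39; 45; 20; 17; 1; 14; 7; 11; 13; 33; 19; 30; 25; 2]%N.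
Definition L50_1 : seq nat := [:: 26; 5; 40; 38; 29; 46; 43; 4; 7; 37; 21; 20; 10; 3; 24; 11; 13; 19; 2; 27; 41; 35; 30; 18; 44; 1; 33; 9; 22; 42; 36; 0; 25; 8; 14; 16; 28; 49; 17; 32; 31; 15; 45; 23; 34; 6; 48; 39; 12; 47]%N.
Definition L50_2 : seq nat := [:: 20; 4; 32; 8; 44; 37; 31; 16; 18; 45; 30; 49; 17; 28; 29; 7; 41; 36; 3; 40; 15; 19; 2; 48; 39; 27; 26; 6; 38; 10; 25; 14; 12; 43; 24; 47; 11; 1; 23; 5; 35; 34; 22; 13; 9; 42; 46; 21; 33; 0]%N.
Lemma good50 : good 50 L50_0 L50_1 L50_2. Proof. vm_compute. reflexivity. Qed.

Definition L98_0 : seq nat := [:: 94; 48; 97; 56; 51; 64; 5; 72; 8; 31; 11; 88; 63; 96; 17; 6; 20; 14; 23; 22; 26; 79; 78; 38; 81; 95; 35; 54; 87; 62; 41; 21; 93; 29; 47; 86; 50; 45; 53; 4; 7; 12; 10; 69; 13; 28; 65; 36; 68; 44; 71; 3; 25; 60; 77; 19; 80; 27; 34; 84; 37; 43; 40; 2; 92; 59; 46; 18; 49; 75; 52; 83; 55; 42; 58; 1; 61; 9; 15; 66; 67; 74; 70; 82; 73; 90; 76; 0; 30; 57; 33; 16; 85; 24; 39; 32; 91; 89]%N.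
Definition L98_1 : seq nat := [:: 80; 29; 79; 45; 78; 61; 28; 77; 27; 44; 75; 11; 74; 76; 73; 92; 72; 10; 22; 26; 70; 42; 69; 9; 68; 25; 18; 90; 66; 57; 65; 24; 15; 89; 63; 56; 62; 23; 12; 39; 60; 6; 59; 71; 58; 87; 8; 5; 7; 21; 55; 37; 54; 53; 4; 20; 52; 36; 2; 3; 1; 19; 0; 35; 48; 51; 96; 67; 95; 83; 94; 50; 93; 17; 43; 33; 91; 49; 41; 16; 40; 81; 88; 97; 38; 64; 86; 31; 85; 47; 84; 14; 34; 30; 82; 46; 32; 13]%N.
Definition L98_2 : seq nat := [:: 58; 3; 18; 34; 27; 16; 85; 96; 94; 78; 54; 60; 14; 42; 23; 24; 81; 6; 90; 86; 1; 68; 59; 50; 19; 32; 77; 63; 37; 45; 46; 76; 55; 9; 64; 89; 73; 22; 82; 53; 91; 84; 51; 66; 11; 97; 69; 30; 29; 12; 87; 43; 47; 74; 7; 56; 65; 38; 25; 20; 83; 2; 92; 33; 52; 15; 61; 95; 70; 28; 79; 10; 39; 41; 48; 72; 8; 5; 17; 36; 75; 67; 35; 49; 93; 31; 4; 13; 62; 44; 71; 26; 80; 57; 40; 88; 0; 21]%N.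
Lemma good98 : good 98 L98_0 L98_1 L98_2. Proof. vm_compute. reflexivity. Qed.

Definition L170_0 : seq nat := [:: 90; 6; 29; 117; 138; 58; 77; 169; 16; 25; 125; 51; 149; 162; 3; 103; 112; 129; 136; 155; 75; 11; 14; 37; 123; 63; 147; 89; 1; 30; 110; 141; 134; 167; 158; 108; 12; 49; 36; 160; 145; 101; 84; 127; 23; 153; 47; 9; 71; 35; 95; 61; 34; 87; 143; 28; 82; 139; 21; 80; 45; 106; 154; 132; 8; 73; 32; 99; 56; 40; 165; 151; 19; 7; 43; 118; 152; 59; 91; 85; 115; 111; 54; 52; 163; 78; 102; 104; 126; 130; 150; 156; 4; 97; 113; 38; 137; 64; 161; 5; 100; 116; 39; 57; 148; 168; 2; 24; 26; 135; 50; 76; 74; 17; 13; 128; 122; 69; 146; 10; 0; 121; 109; 62; 48; 88; 157; 114; 96; 140; 120; 81; 144; 107; 83; 133; 22; 159; 46; 15; 70; 41; 94; 67; 33; 93; 142; 119; 166; 60; 105; 86; 44; 27; 68; 53; 92; 79; 31; 20; 55; 131; 164; 72; 18; 98; 42; 124; 66; 65]%N.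
Definition L170_1 : seq nat := [:: 156; 27; 114; 24; 157; 106; 115; 103; 73; 15; 116; 97; 74; 9; 32; 91; 75; 88; 33; 85; 76; 82; 34; 79; 77; 161; 120; 158; 163; 155; 121; 67; 164; 149; 122; 61; 80; 58; 38; 140; 81; 137; 124; 134; 167; 46; 125; 128; 168; 40; 41; 37; 84; 119; 127; 31; 0; 28; 43; 25; 1; 22; 44; 104; 87; 16; 45; 98; 3; 95; 131; 92; 4; 89; 47; 86; 5; 83; 48; 165; 6; 162; 49; 159; 7; 71; 50; 153; 8; 65; 136; 62; 94; 59; 52; 141; 10; 53; 138; 135; 96; 132; 54; 129; 12; 126; 55; 123; 13; 35; 56; 117; 99; 29; 57; 111; 100; 108; 143; 20; 101; 102; 144; 14; 17; 11; 60; 93; 18; 90; 146; 2; 19; 169; 147; 166; 105; 78; 148; 160; 21; 72; 64; 154; 107; 151; 150; 63; 23; 145; 66; 142; 109; 139; 152; 51; 110; 133; 68; 130; 26; 42; 69; 39; 112; 36; 70; 118; 113; 30]%N.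
Definition L170_2 : seq nat := [:: 139; 101; 91; 134; 43; 82; 165; 115; 117; 63; 69; 96; 106; 129; 143; 77; 95; 25; 132; 58; 84; 6; 36; 39; 158; 157; 110; 105; 147; 53; 14; 86; 51; 34; 88; 152; 125; 15; 162; 48; 114; 81; 151; 29; 103; 62; 55; 10; 7; 128; 44; 76; 166; 24; 118; 57; 70; 90; 107; 38; 59; 156; 11; 19; 133; 52; 0; 85; 37; 33; 159; 66; 26; 99; 148; 47; 100; 80; 137; 113; 4; 61; 41; 94; 78; 42; 30; 160; 67; 23; 104; 141; 56; 89; 8; 122; 45; 155; 167; 18; 119; 136; 71; 169; 108; 32; 145; 65; 97; 13; 49; 131; 1; 164; 123; 112; 75; 60; 27; 93; 64; 126; 16; 74; 138; 22; 5; 140; 127; 3; 79; 121; 116; 154; 153; 17; 20; 50; 142; 83; 9; 31; 46; 149; 168; 12; 120; 130; 72; 163; 109; 111; 146; 144; 98; 92; 135; 40; 2; 73; 124; 21; 161; 54; 28; 87; 150; 35; 102; 68]%N.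
Lemma good170 : good 170 L170_0 L170_1 L170_2. Proof. vm_compute. reflexivity. Qed.

Definition L242_0 : seq nat := [:: 8; 84; 144; 142; 38; 200; 53; 137; 68; 74; 83; 11; 98; 190; 234; 127; 7; 185; 22; 1; 158; 180; 173; 238; 188; 54; 82; 112; 97; 49; 233; 107; 6; 44; 21; 223; 36; 160; 172; 218; 187; 34; 202; 92; 217; 29; 111; 208; 5; 145; 141; 203; 35; 19; 171; 198; 65; 135; 201; 193; 216; 9; 110; 67; 125; 4; 140; 62; 155; 120; 170; 178; 64; 236; 79; 52; 215; 231; 230; 168; 3; 105; 18; 42; 33; 100; 48; 37; 63; 95; 78; 153; 214; 211; 229; 148; 123; 85; 17; 143; 32; 80; 47; 138; 183; 75; 77; 133; 213; 70; 228; 128; 122; 186; 16; 2; 152; 181; 46; 118; 61; 55; 76; 113; 91; 50; 106; 108; 0; 166; 136; 224; 30; 40; 45; 219; 60; 156; 196; 93; 90; 151; 226; 209; 241; 25; 14; 204; 150; 20; 165; 199; 59; 15; 195; 194; 89; 131; 104; 189; 240; 126; 134; 184; 149; 121; 164; 58; 179; 237; 73; 174; 88; 232; 103; 169; 239; 227; 12; 43; 27; 222; 163; 159; 57; 96; 72; 154; 87; 212; 102; 28; 117; 86; 132; 23; 26; 81; 41; 139; 56; 197; 71; 13; 207; 192; 101; 129; 116; 66; 10; 124; 146; 182; 161; 119; 176; 177; 191; 235; 206; 51; 221; 109; 115; 167; 130; 225; 24; 162; 39; 99; 175; 157; 69; 94; 205; 31; 220; 210; 114; 147]%N.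
Definition L242_1 : seq nat := [:: 207; 209; 140; 13; 73; 180; 6; 226; 60; 30; 235; 197; 47; 1; 222; 168; 155; 214; 88; 139; 21; 64; 196; 231; 8; 35; 183; 81; 116; 127; 49; 52; 103; 219; 157; 144; 90; 190; 23; 236; 77; 40; 10; 86; 185; 132; 118; 57; 51; 224; 105; 149; 38; 74; 213; 120; 25; 166; 200; 91; 12; 137; 187; 62; 241; 229; 174; 154; 107; 79; 161; 4; 215; 50; 148; 96; 202; 142; 14; 188; 68; 113; 122; 159; 55; 84; 109; 9; 42; 176; 217; 101; 29; 147; 204; 193; 16; 239; 191; 164; 3; 210; 178; 135; 111; 181; 165; 106; 98; 31; 152; 198; 206; 123; 18; 169; 72; 94; 126; 19; 59; 65; 234; 232; 167; 36; 221; 82; 33; 128; 208; 53; 141; 220; 195; 24; 7; 70; 61; 237; 115; 162; 48; 87; 223; 133; 156; 58; 89; 225; 143; 150; 76; 75; 130; 121; 184; 46; 117; 92; 171; 138; 104; 63; 158; 230; 212; 34; 145; 80; 78; 5; 11; 172; 186; 218; 119; 22; 173; 189; 227; 114; 39; 160; 93; 85; 26; 131; 201; 177; 134; 102; 67; 27; 0; 194; 175; 240; 108; 44; 41; 211; 95; 136; 28; 182; 203; 228; 15; 153; 69; 199; 2; 124; 56; 170; 110; 216; 43; 20; 97; 66; 151; 233; 205; 37; 17; 83; 192; 129; 125; 54; 179; 100; 112; 146; 45; 71; 99; 238; 32; 163]%N.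
Definition L242_2 : seq nat := [:: 35; 87; 128; 88; 221; 89; 193; 211; 165; 212; 137; 92; 109; 93; 202; 94; 53; 95; 146; 96; 118; 218; 90; 98; 183; 220; 34; 100; 6; 222; 99; 223; 192; 103; 164; 225; 15; 226; 229; 227; 80; 107; 173; 108; 145; 230; 117; 231; 210; 232; 182; 233; 33; 113; 5; 114; 219; 115; 70; 237; 42; 238; 14; 239; 228; 240; 200; 241; 172; 121; 144; 1; 116; 123; 209; 124; 181; 4; 153; 126; 125; 127; 97; 7; 190; 8; 162; 130; 13; 131; 106; 11; 78; 12; 171; 134; 143; 135; 236; 136; 208; 16; 180; 17; 152; 139; 3; 19; 217; 141; 189; 142; 40; 22; 133; 23; 105; 24; 77; 25; 170; 147; 21; 148; 235; 149; 207; 29; 58; 151; 30; 31; 2; 32; 216; 154; 67; 155; 160; 156; 132; 36; 104; 37; 197; 38; 48; 39; 20; 161; 234; 41; 85; 163; 57; 43; 150; 44; 122; 45; 215; 46; 66; 47; 159; 169; 10; 49; 224; 50; 196; 51; 168; 52; 140; 174; 112; 175; 205; 55; 56; 177; 28; 178; 0; 179; 214; 59; 65; 60; 158; 61; 9; 62; 102; 184; 195; 64; 167; 186; 18; 187; 111; 188; 204; 68; 176; 69; 27; 191; 120; 71; 213; 72; 185; 73; 157; 74; 129; 75; 101; 76; 194; 198; 166; 199; 138; 79; 110; 201; 203; 81; 54; 82; 26; 83; 119; 84; 91; 206; 63; 86]%N.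
Lemma good242 : good 242 L242_0 L242_1 L242_2. Proof. vm_compute. reflexivity. Qed.

Definition L290_0 : seq nat := [:: 186; 87; 178; 279; 170; 181; 17; 83; 154; 275; 1; 32; 138; 79; 130; 271; 267; 28; 114; 220; 106; 122; 243; 169; 90; 71; 227; 118; 74; 20; 211; 67; 58; 259; 50; 16; 187; 63; 179; 110; 171; 157; 163; 204; 10; 251; 2; 8; 139; 200; 131; 247; 123; 149; 115; 196; 107; 98; 99; 0; 91; 47; 228; 239; 75; 141; 212; 188; 59; 235; 51; 282; 43; 184; 35; 231; 27; 278; 19; 180; 156; 82; 148; 129; 285; 176; 132; 223; 269; 270; 116; 172; 253; 219; 100; 266; 92; 168; 84; 215; 221; 117; 68; 164; 205; 66; 197; 113; 44; 15; 36; 62; 173; 254; 165; 11; 12; 203; 4; 250; 286; 152; 133; 199; 125; 101; 262; 3; 109; 195; 246; 97; 93; 289; 85; 46; 222; 238; 69; 140; 61; 42; 53; 234; 190; 281; 182; 183; 29; 230; 21; 277; 158; 34; 150; 226; 142; 128; 134; 175; 126; 77; 263; 124; 255; 26; 102; 73; 94; 120; 86; 167; 78; 214; 70; 261; 207; 18; 54; 65; 191; 112; 38; 14; 30; 206; 22; 108; 159; 155; 6; 57; 143; 249; 280; 151; 127; 198; 264; 245; 256; 147; 248; 49; 95; 241; 232; 288; 224; 45; 216; 237; 208; 284; 55; 41; 192; 88; 39; 135; 31; 37; 23; 229; 160; 276; 7; 33; 144; 80; 136; 272; 273; 174; 265; 76; 257; 268; 104; 25; 96; 72; 233; 119; 225;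 166; 217; 213; 64; 260; 56; 162; 193; 209; 40; 111; 177; 13; 24; 60; 161; 252; 153; 9; 145; 201; 137; 103; 274; 5; 121; 52; 258; 244; 105; 146; 242; 48; 89; 240; 81; 287; 218; 189; 210; 236; 202; 283; 194; 185]%N.
Definition L290_1 : seq nat := [:: 242; 28; 216; 217; 190; 116; 164; 160; 138; 204; 257; 248; 86; 147; 205; 46; 34; 235; 153; 134; 272; 33; 246; 222; 220; 266; 49; 20; 23; 64; 287; 253; 261; 152; 90; 196; 209; 240; 38; 284; 12; 183; 131; 82; 105; 126; 224; 170; 198; 214; 172; 113; 146; 157; 120; 56; 94; 100; 213; 289; 187; 43; 16; 232; 280; 276; 109; 30; 83; 74; 202; 118; 176; 17; 150; 206; 124; 250; 98; 149; 72; 193; 191; 237; 165; 281; 139; 35; 258; 79; 87; 123; 61; 22; 180; 211; 154; 255; 273; 9; 102; 53; 221; 97; 195; 286; 24; 185; 288; 84; 117; 128; 91; 27; 210; 71; 184; 115; 158; 14; 132; 203; 106; 247; 225; 1; 54; 45; 173; 89; 2; 278; 121; 177; 95; 76; 69; 265; 188; 19; 162; 63; 136; 252; 110; 151; 229; 50; 58; 239; 32; 283; 6; 182; 270; 81; 99; 125; 73; 169; 47; 68; 166; 112; 140; 11; 114; 200; 233; 244; 207; 143; 181; 42; 10; 231; 129; 275; 103; 29; 77; 218; 51; 262; 25; 161; 144; 60; 263; 249; 92; 3; 66; 192; 40; 236; 159; 135; 133; 179; 107; 78; 226; 267; 55; 21; 174; 65; 148; 254; 122; 8; 241; 52; 70;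 96; 44; 285; 18; 39; 282; 228; 111; 127; 85; 171; 59; 215; 178; 259; 7; 13; 271; 57; 245; 101; 219; 145; 48; 189; 167; 88; 141; 277; 260; 31; 234; 75; 208; 264; 37; 163; 156; 62; 130; 251; 104; 5; 223; 194; 197; 238; 26; 137; 0; 36; 119; 80; 93; 269; 212; 168; 41; 67; 15; 256; 279; 155; 108; 199; 227; 243; 201; 142; 175; 186; 4; 230; 268; 274]%N.
Definition L290_2 : seq nat := [:: 195; 35; 68; 96; 231; 12; 249; 218; 122; 279; 140; 50; 13; 256; 176; 172; 49; 233; 212; 4; 230; 210; 103; 271; 121; 187; 139; 248; 157; 164; 175; 225; 48; 141; 211; 57; 84; 263; 247; 179; 120; 95; 283; 156; 11; 72; 29; 133; 192; 194; 65; 110; 83; 171; 101; 87; 119; 148; 282; 209; 155; 125; 28; 186; 46; 102; 64; 163; 227; 79; 245; 285; 118; 201; 281; 117; 154; 178; 27; 94; 190; 10; 208; 216; 81; 277; 99; 193; 262; 254; 280; 170; 8; 86; 26; 147; 189; 63; 207; 124; 80; 40; 243; 246; 261; 162; 134; 223; 152; 284; 25; 200; 43; 116; 61; 177; 224; 238; 97; 9; 115; 70; 278; 131; 151; 47; 24; 108; 42; 169; 205; 85; 78; 1; 241; 62; 114; 268; 132; 39; 150; 100; 168; 161; 41; 222; 59; 138; 77; 54; 240; 260; 258; 31; 276; 237; 149; 153; 167; 69; 185; 275; 58; 191; 221; 252; 239; 23; 257; 229; 130; 145; 3; 206; 21; 267; 184; 38; 202; 244; 220; 15; 93; 76; 111;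 137; 274; 53; 2; 259; 165; 30; 183; 236; 56; 7; 219; 213; 92; 129; 255; 45; 128; 106; 146; 22; 19; 228; 182; 144; 55; 60; 73; 266; 91; 37; 109; 98; 272; 14; 0; 75; 18; 136; 181; 197; 199; 113; 217; 174; 90; 235; 253; 6; 126; 67; 289; 273; 17; 44; 180; 250; 198; 166; 71; 82; 89; 143; 107; 204; 270; 265; 288; 36; 16; 242; 34; 158; 52; 74; 215; 135; 88; 51; 251; 112; 269; 173; 287; 234; 160; 5; 33; 66; 196; 127; 214; 188; 232; 104; 105; 20; 123; 226; 286; 142; 159; 203; 32; 264]%N.
Lemma good290 : good 290 L290_0 L290_1 L290_2. Proof. vm_compute. reflexivity. Qed.

Definition L338_0 : seq nat := [:: 258; 39; 28; 198; 136; 188; 75; 9; 14; 168; 291; 327; 61; 317; 169; 307; 277; 128; 47; 287; 155; 108; 94; 267; 33; 88; 310; 247; 80; 237; 19; 227; 296; 48; 235; 38; 174; 197; 282; 18; 221; 177; 160; 167; 99; 157; 207; 147; 146; 137; 85; 127; 193; 286; 132; 276; 240; 266; 179; 256; 118; 77; 57; 67; 165; 226; 104; 216; 212; 206; 151; 27; 259; 186; 29; 7; 306; 166; 76; 325; 184; 315; 123; 305; 62; 295; 170; 285; 109; 106; 217; 96; 156; 255; 264; 245; 34; 66; 142; 56; 250; 46; 189; 36; 297; 26; 236; 16; 175; 6; 114; 334; 222; 324; 330; 145; 269; 304; 208; 294; 316; 115; 86; 274; 194; 95; 133; 254; 72; 244; 180; 65; 288; 224; 58; 45; 335; 204; 105;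 25; 44; 15; 152; 5; 91; 164; 30; 154; 138; 144; 246; 134; 185; 293; 124; 283; 63; 273; 171; 263; 279; 253; 49; 74; 326; 64; 265; 223; 35; 213; 312; 203; 82; 24; 21; 183; 129; 4; 68; 163; 176; 322; 284; 143; 54; 302; 162; 292; 101; 113; 209; 272; 148; 262; 87; 83; 195; 73; 303; 232; 242; 53; 181; 43; 120; 202; 59; 192; 336; 182; 275; 3; 214; 331; 153; 321; 261; 311; 31; 301; 308; 122; 78; 281; 17; 102; 125; 92; 233; 251; 172; 241; 280; 231; 50; 52; 158; 42; 97; 201; 205; 191; 313; 12; 252; 2; 22; 161; 299; 320; 69; 141; 8; 300; 116; 290; 55; 111; 332; 270; 271; 260; 210; 81; 149; 71; 257; 230; 196; 220; 135; 41; 243; 200; 13; 190; 121; 11; 60; 1; 337; 329; 107; 150; 215; 140; 323; 130; 93; 289; 32; 110; 309; 100; 248; 90; 187; 249; 126; 239; 234; 229; 173; 219; 112; 40; 51; 199; 159; 20; 98; 10; 37; 0; 314; 328; 84; 318; 23; 139; 131; 298; 70; 119; 178; 278; 117; 268; 225; 89; 333; 79; 103; 238; 211; 228; 319; 218]%N.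
Definition L338_1 : seq nat := [:: 322; 36; 65; 308; 146; 242; 58; 176; 139; 110; 51; 44; 301; 316; 213; 81; 125; 15; 37; 118; 287; 221; 199; 155; 280; 258; 23; 192; 273; 295; 185; 60; 266; 332; 178; 97; 90; 200; 171; 134; 252; 237; 164; 2; 245; 274; 326; 208; 69; 311; 319; 76; 231; 179; 312; 113; 224; 216; 305; 150; 48; 84; 129; 18; 210; 121; 291; 55; 203; 327; 115; 92; 196; 26; 108; 298; 20; 232; 270; 166; 182; 269; 94; 34; 6; 306; 256; 71; 337; 5; 249; 277; 161; 211; 73; 314; 154; 248; 66; 13; 147; 116; 228; 50; 309; 153; 52; 87; 133; 190; 45; 293; 126; 227; 207; 330; 119; 264; 31; 29; 281; 132; 24; 235; 105; 0; 186; 272; 267; 206; 10; 140; 260; 243; 172; 8; 253; 111; 334; 214; 77; 148; 158; 251; 239; 16; 320; 288; 63; 222; 144; 325; 225; 259; 137; 193; 49; 296; 299; 230; 42; 333; 123; 98; 35; 201; 285; 304; 28; 238; 109; 3; 21; 275; 271; 209; 14; 143; 95; 246; 7; 180; 88; 283; 169; 217; 250; 151; 331; 254; 74; 19; 324; 122; 67; 56; 317; 328; 229; 93; 310; 27; 53; 130; 303; 64; 46; 336; 127; 101; 39; 204; 120; 138; 32; 72; 282; 175; 194; 278; 106; 212; 187; 315; 99; 80; 11; 183; 261; 117; 173; 220; 85; 323; 335; 257; 78; 191; 159; 294; 240; 59; 321; 162; 233; 96; 145; 30; 57; 302; 307; 236; 219; 170; 131; 104; 43; 38; 124; 141; 205;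 75; 286; 9; 198; 112; 279; 215; 22; 149; 103; 83; 184; 17; 265; 289; 177; 54; 89; 157; 1; 91; 82; 25; 163; 297; 244; 62; 156; 165; 68; 268; 318; 33; 61; 136; 142; 70; 223; 4; 135; 107; 47; 41; 128; 313; 40; 247; 290; 12; 202; 284; 114; 218; 195; 152; 276; 86; 188; 189; 100; 292; 181; 226; 262; 160; 174; 263; 255; 197; 167; 300; 79; 234; 329; 168; 241; 102]%N.
Definition L338_2 : seq nat := [:: 46; 257; 262; 250; 140; 243; 187; 236; 234; 60; 281; 53; 328; 215; 206; 208; 253; 32; 131; 194; 178; 18; 56; 11; 103; 4; 319; 335; 28; 159; 244; 152; 291; 314; 169; 307; 47; 300; 94; 124; 310; 117; 188; 110; 66; 272; 282; 265; 329; 89; 207; 82; 254; 75; 301; 237; 179; 61; 226; 54; 273; 216; 151; 209; 198; 33; 245; 195; 292; 19; 170; 12; 217; 174; 95; 167; 311; 160; 20; 322; 67; 146; 114; 139; 161; 132; 39; 125; 255; 118; 302; 111; 180; 104; 227; 266; 105; 259; 321; 83; 199; 76; 246; 238; 293; 62; 171; 224; 218; 48; 96; 41; 312; 34; 190; 196; 68; 189; 284; 182; 162; 175; 40; 168; 256; 330; 134; 154; 181; 316; 59; 309; 275; 133; 153; 126; 200; 119; 78; 112; 294; 274; 172; 98; 219; 260; 97; 84; 144; 77; 191; 70; 69; 63; 116; 225; 163; 49; 210; 42; 88; 35; 135; 197; 13; 21; 229; 14; 276; 7; 323; 0; 201; 331; 79; 155; 295; 317; 173; 141; 51; 303; 267;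 296; 145; 120; 23; 113; 239; 106; 286; 99; 164; 261; 211; 85; 258; 247; 136; 240; 183; 233; 230; 57; 277; 50; 324; 43; 202; 36; 80; 29; 127; 22; 5; 184; 221; 8; 268; 1; 315; 332; 24; 325; 71; 318; 287; 142; 334; 304; 212; 297; 90; 121; 306; 283; 15; 107; 231; 269; 278; 93; 156; 86; 203; 248; 81; 72; 128; 65; 6; 58; 222; 220; 100; 213; 147; 37; 25; 30; 241; 192; 288; 185; 166; 9; 44; 2; 91; 333; 138; 326; 16; 150; 232; 143; 279; 305; 157; 298; 204; 122; 251; 115; 129; 108; 176; 270; 223; 263; 101; 87; 148; 249; 26; 242; 73; 235; 289; 228; 336; 52; 214; 45; 92; 38; 308; 31; 17; 193; 64; 186; 280; 10; 158; 3; 205; 165; 252; 327; 299; 320; 177; 313; 55; 137; 271; 130; 149; 123; 27; 285; 74; 109; 290; 102; 337; 264]%N.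
Lemma good338 : good 338 L338_0 L338_1 L338_2. Proof. vm_compute. reflexivity. Qed.

Theorem mainTheorem9 :
  forall n : nat, n \in [:: 50; 98; 170; 242; 290; 338]%N ->
    exists Q : 'M['Z_n]_(n.+1, 4),
      is_DCA Q /\ normalized_DCA Q /\ DCA_P1 Q /\ DCA_P2 Q.
Proof.
move=> n; rewrite !inE.
case/orP => [/eqP -> | ]; first by exists (mkQ 48 (SS 50 L50_0 L50_1 L50_2)); apply: allgen; exact: good50.
case/orP => [/eqP -> | ]; first by exists (mkQ 96 (SS 98 L98_0 L98_1 L98_2)); apply: allgen; exact: good98.
case/orP => [/eqP -> | ]; first by exists (mkQ 168 (SS 170 L170_0 L170_1 L170_2)); apply: allgen; exact: good170.
case/orP => [/eqP -> | ]; first by exists (mkQ 240 (SS 242 L242_0 L242_1 L242_2)); apply: allgen; exact: good242.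
case/orP => [/eqP -> | ]; first by exists (mkQ 288 (SS 290 L290_0 L290_1 L290_2)); apply: allgen; exact: good290.
move/eqP ->; by exists (mkQ 336 (SS 338 L338_0 L338_1 L338_2)); apply: allgen; exact: good338.
Qed.
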